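(* Let $((i_0,j_0),\dots,(i_{q-1},j_{q-1}))$ be a sequence of pairs in $[n]^2$ with $i_\ell<j_\ell$ defining a sorting network, and let $Q_n\subset\mathbb{R}^{n(q+1)}$ and $\tilde Q_n\subset\mathbb{R}^{n+2q}$ be as defined below. Then $Q_n$ and $\tilde Q_n$ are affinely equivalent: there exist affine maps $\tilde\pi:\mathbb{R}^{n(q+1)}\to\mathbb{R}^{n+2q}$ and $\overline{\pi}:\mathbb{R}^{n+2q}\to\mathbb{R}^{n(q+1)}$ such that $\overline{\pi}(\tilde Q_n)=Q_n$ and $\tilde\pi(Q_n)=\tilde Q_n$.
   Context: The sequence defines a sorting network if applying successively, for $\ell=0,\dots,q-1$, the map exchanging coordinates $x_{i_\ell},x_{j_\ell}$ whenever $x_{i_\ell}>x_{j_\ell}$, sends every $(\sigma(1),\dots,\sigma(n))$, $\sigma\in\mathcal{S}_n$, to $x_{id}=(1,2,\dots,n)$. Define $Q_n$ as the set of $(y_0,\dots,y_q)\in(\mathbb{R}^n)^{q+1}$ with $y_q=x_{id}$ and, for each $k=0,\dots,q-1$: $(y_{k+1})_l=(y_k)_l$ for all $l\notin\{i_k,j_k\}$; $(y_{k+1})_{i_k}+(y_{k+1})_{j_k}=(y_k)_{i_k}+(y_k)_{j_k}$; and $(y_{k+1})_{j_k}-(y_{k+1})_{i_k}\ge |(y_k)_{j_k}-(y_k)_{i_k}|$. For $\tilde w=(y_0,a_1,b_1,\dots,a_q,b_q)\in\mathbb{R}^n\times\mathbb{R}^{2q}$ define linear maps $z_0(\tilde w)=y_0$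 and, for $1\le m\le q$, $z_m(\tilde w)\in\mathbb{R}^n$ obtained from $z_{m-1}(\tilde w)$ by replacing its $i_{m-1}$-th coordinate by $a_m$ and its $j_{m-1}$-th coordinate by $b_m$; let $\alpha_m(\tilde w)$ and $\beta_m(\tilde w)$ be the $i_{m-1}$-th and $j_{m-1}$-th coordinates of $z_{m-1}(\tilde w)$. Then $\tilde Q_n=\{\tilde w\in\mathbb{R}^{n+2q}: z_q(\tilde w)=x_{id},\ a_m+b_m=\alpha_m(\tilde w)+\beta_m(\tilde w),\ b_m\ge\max\{\alpha_m(\tilde w),\beta_m(\tilde w)\}\ \forall 1\le m\le q\}$. *)

(* Defs.v *)
From HB Require Import structures.
From mathcomp Require Import all_boot all_order all_algebra all_fingroup.
From mathcomp Require Import classical_sets.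
Set Implicit Arguments. Unset Strict Implicit. Unset Printing Implicit Defensive.
Import Order.TTheory GRing.Theory Num.Theory.
Local Open Scope ring_scope.

Section Defs.
Variables (R : realFieldType) (n q : nat).
(* the comparator sequence: comparator l (0 <= l < q) is (ci l, cj l) *)
Variables (ci cj : 'I_q -> 'I_n).

Definition x_id : 'rV[R]_n := \row_k (k.+1)%:R.

Definition comparator (l : 'I_q) (x : 'rV[R]_n) : 'rV[R]_n :=
  if x 0 (cj l) < x 0 (ci l) then
    \row_k (if k == ci l then x 0 (cj l) else if k == cj l then x 0 (ci l) else x 0 k)
  else x.

Definition apply_net (x : 'rV[R]_n) : 'rV[R]_n :=
  foldl (fun y l => comparator l y) x (enum 'I_q).

Definition is_sorting_network : Prop :=
  forall s : 'S_n, apply_net (\row_k ((s k).+1)%:R) = x_id.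

(* R^{n(q+1)} is 'rV_(q.+1 * n); y_k is the k-th row of vec_mx Y *)
Definition yk (Y : 'rV[R]_(q.+1 * n)) (k : 'I_q.+1) : 'rV[R]_n := row k (vec_mx Y).

Definition Qn : set 'rV[R]_(q.+1 * n) :=
  [set Y | yk Y ord_max = x_id /\
    forall l : 'I_q,
      let y := yk Y (widen_ord (leqnSn q) l) in
      let y' := yk Y (lift ord0 l) in
      [/\ (forall t : 'I_n, t != ci l -> t != cj l -> y' 0 t = y 0 t),
          y' 0 (ci l) + y' 0 (cj l) = y 0 (ci l) + y 0 (cj l) &
          `|y 0 (cj l) - y 0 (ci l)| <= y' 0 (cj l) - y' 0 (ci l)]].

(* R^{n+2q}: w = (y_0, a_1, b_1, ..., a_q, b_q); y_0 = lsubmx w and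
   (a_{l+1}, b_{l+1}) is row l of vec_mx (rsubmx w) : 'M_(q, 2) *)
Definition wy0 (w : 'rV[R]_(n + q * 2)) : 'rV[R]_n := lsubmx w.
Definition wa (w : 'rV[R]_(n + q * 2)) (l : 'I_q) : R := vec_mx (rsubmx w) l 0.
Definition wb (w : 'rV[R]_(n + q * 2)) (l : 'I_q) : R := vec_mx (rsubmx w) l 1.

Fixpoint zm (w : 'rV[R]_(n + q * 2)) (m : nat) : 'rV[R]_n :=
  match m with
  | 0 => wy0 w
  | m'.+1 =>
    match @insub _ (fun k => (k < q)%N) 'I_q m' with
    | Some l => \row_t (if t == ci l then wa w l
                        else if t == cj l then wb w l else zm w m' 0 t)
    | None => zm w m'
    end
  end.

(* alpha_{l+1}, beta_{l+1} : coordinates i_l, j_l of z_l *)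
Definition alpha (w : 'rV[R]_(n + q * 2)) (l : 'I_q) : R := zm w l 0 (ci l).
Definition beta (w : 'rV[R]_(n + q * 2)) (l : 'I_q) : R := zm w l 0 (cj l).

Definition tQn : set 'rV[R]_(n + q * 2) :=
  [set w | zm w q = x_id /\
    forall l : 'I_q, wa w l + wb w l = alpha w l + beta w l /\
                     Num.max (alpha w l) (beta w l) <= wb w l].

End Defs.

Definition affine_map (R : realFieldType) (m p : nat) (f : 'rV[R]_m -> 'rV[R]_p) : Prop :=
  exists (A : 'M[R]_(m, p)) (c : 'rV[R]_p), forall x, f x = x *m A + c.

(* Main.v *)
Require Import Defs.
From HB Require Import structures.
From mathcomp Require Import all_boot all_order all_algebra all_fingroup.
From mathcomp Require Import classical_sets.
From mathcomp Require Import lra.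
Import Order.TTheory GRing.Theory Num.Theory.
Local Open Scope ring_scope.
Local Open Scope classical_set_scope.

Set Implicit Arguments. Unset Strict Implicit. Unset Printing Implicit Defensive.

Lemma sel_affine (R : realFieldType) m p (f : 'rV[R]_m -> 'rV[R]_p) :
  (forall k : 'I_p, exists s : 'I_m, forall x, f x 0 k = x 0 s) -> affine_map f.
Proof.
move=> H; have [s Hs] := fin_all_exists H.
exists (\matrix_(i, j) (i == s j)%:R), 0 => x.
apply/rowP => k; rewrite addr0 !mxE Hs (bigD1 (s k)) //= mxE eqxx mulr1.
rewrite big1 ?addr0 // => i /negbTE Hi; by rewrite mxE Hi mulr0.
Qed.

Section S.
Variables (R : realFieldType) (n q : nat) (ci cj : 'I_q -> 'I_n).
Hypothesis Hlt : forall l : 'I_q, (ci l < cj l)%N.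

Lemma cjci l : (cj l == ci l) = false.
Proof. by apply/negbTE; rewrite neq_ltn Hlt orbT. Qed.

Lemma zmS m (Hm : (m < q)%N) (w : 'rV[R]_(n + q * 2)) :
  zm ci cj w m.+1 = \row_t (if t == ci (Ordinal Hm) then wa w (Ordinal Hm)
     else if t == cj (Ordinal Hm) then wb w (Ordinal Hm) else zm ci cj w m 0 t).
Proof. by rewrite /= (insubT (fun k => (k < q)%N) Hm). Qed.

Lemma zmN m (Hm : (q <= m)%N) (w : 'rV[R]_(n + q * 2)) :
  zm ci cj w m.+1 = zm ci cj w m.
Proof. by rewrite /= insubF // ltnNge Hm. Qed.

Lemma zm_sel m t : exists s, forall w : 'rV[R]_(n + q * 2), zm ci cj w m 0 t = w 0 s.
Proof.
elim: m t => [|m IH] t.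
  by exists (lshift _ t) => w; rewrite /= /wy0 mxE.
case: (ltnP m q) => Hm.
  case: (t =P ci (Ordinal Hm)) => [->|Hi].
    by exists (rshift n (mxvec_index (Ordinal Hm) 0)) => w;
      rewrite zmS mxE eqxx /wa !mxE.
  case: (t =P cj (Ordinal Hm)) => [->|Hj].
    by exists (rshift n (mxvec_index (Ordinal Hm) 1)) => w;
      rewrite zmS mxE cjci eqxx /wb !mxE.
  have [s Hs] := IH t; exists s => w.
  by rewrite zmS mxE (introF eqP Hi) (introF eqP Hj) Hs.
have [s Hs] := IH t; exists s => w; by rewrite zmN.
Qed.

Definition pb (w : 'rV[R]_(n + q * 2)) : 'rV[R]_(q.+1 * n) :=
  mxvec (\matrix_(k < q.+1, t < n) zm ci cj w k 0 t).

Definition pt (Y : 'rV[R]_(q.+1 * n)) : 'rV[R]_(n + q * 2) :=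
  row_mx (yk Y ord0) (mxvec (\matrix_(l < q, e < 2)
    if val e == 0%N then yk Y (lift ord0 l) 0 (ci l) else yk Y (lift ord0 l) 0 (cj l))).

Lemma ykpb w (k : 'I_q.+1) t : yk (pb w) k 0 t = zm ci cj w k 0 t.
Proof. by rewrite /yk /pb mxvecK !mxE. Qed.

Lemma pb_aff : affine_map pb.
Proof.
apply: sel_affine => k; case/mxvec_indexP: k => i t.
have [s Hs] := zm_sel i t; exists s => w.
by rewrite /pb mxvecE mxE Hs.
Qed.

Lemma pt_aff : affine_map pt.
Proof.
apply: sel_affine => k; rewrite /pt.
rewrite -(splitK k); case: (split k) => [t|j] /=.
  by exists (mxvec_index ord0 t) => Y; rewrite row_mxEl /yk !mxE.
case/mxvec_indexP: j => l e.
case: (boolP (val e == 0%N)) => He.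
  by exists (mxvec_index (lift ord0 l) (ci l)) => Y; rewrite row_mxEr mxvecE !mxE /= He.
by exists (mxvec_index (lift ord0 l) (cj l)) => Y; rewrite row_mxEr mxvecE !mxE /= (negbTE He).
Qed.


Lemma zmS' (l : 'I_q) (w : 'rV[R]_(n + q * 2)) :
  zm ci cj w l.+1 = \row_t (if t == ci l then wa w l
     else if t == cj l then wb w l else zm ci cj w l 0 t).
Proof. by case: l => m Hm; exact: zmS. Qed.

Lemma pb_Q w : tQn ci cj w -> Qn ci cj (pb w).
Proof.
case=> Hq Hl; split.
  by apply/rowP => t; rewrite ykpb /= Hq.
move=> l /=; rewrite !ykpb (_ : nat_of_ord (lift ord0 l) = l.+1) // (_ : nat_of_ord (widen_ord (leqnSn q) l) = l) // zmS' !mxE eqxx cjci eqxx.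
have [Hs Hm] := Hl l; rewrite /alpha /beta in Hs Hm.
split.
- by move=> t /negbTE Ht1 /negbTE Ht2; rewrite !ykpb (_ : nat_of_ord (lift ord0 l) = l.+1) // (_ : nat_of_ord (widen_ord (leqnSn q) l) = l) // zmS' mxE Ht1 Ht2.
- exact: Hs.
- move: Hs Hm; set a := wa w l; set b := wb w l; set x := zm ci cj w l 0 (ci l);
  set y := zm ci cj w l 0 (cj l).
  rewrite ge_max ler_norml => Hs /andP[H1 H2].
  apply/andP; split; lra.
Qed.

Lemma wa_pt Y l : wa (pt Y) l = yk Y (lift ord0 l) 0 (ci l).
Proof. by rewrite /wa /pt row_mxKr mxvecK mxE. Qed.
Lemma wb_pt Y l : wb (pt Y) l = yk Y (lift ord0 l) 0 (cj l).
Proof. by rewrite /wb /pt row_mxKr mxvecK mxE. Qed.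

Lemma zm_pt m (Hm : (m < q.+1)%N) Y : Qn ci cj Y -> zm ci cj (pt Y) m = yk Y (Ordinal Hm).
Proof.
move=> HY; elim: m Hm => [|m IH] Hm.
  by rewrite /= /wy0 /pt row_mxKl; congr yk; exact: val_inj.
have Hm' : (m < q)%N := Hm.
have El : lift ord0 (Ordinal Hm') = Ordinal Hm by apply: val_inj.
have Ew : widen_ord (leqnSn q) (Ordinal Hm') = Ordinal (ltnW Hm) by apply: val_inj.
rewrite (zmS Hm'); apply/rowP => t; rewrite [LHS]mxE.
case: (t =P ci (Ordinal Hm')) => [->|/eqP Hi]; first by rewrite wa_pt El.
case: (t =P cj (Ordinal Hm')) => [->|/eqP Hj]; first by rewrite wb_pt El.
rewrite (IH (ltnW Hm)).
have [H1 _ _] := HY.2 (Ordinal Hm'); move: H1; rewrite /= El Ew => H1.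
by rewrite H1.
Qed.

Lemma zm_pt' (k : 'I_q.+1) Y : Qn ci cj Y -> zm ci cj (pt Y) k = yk Y k.
Proof. by case: k => m Hm; exact: zm_pt. Qed.

Lemma pt_tQ Y : Qn ci cj Y -> tQn ci cj (pt Y).
Proof.
move=> HY; split.
  by rewrite (zm_pt' ord_max HY) HY.1.
move=> l; rewrite /alpha /beta wa_pt wb_pt.
have -> : zm ci cj (pt Y) l = yk Y (widen_ord (leqnSn q) l).
  by rewrite -(zm_pt' _ HY).
have [_ Hs Ha] := HY.2 l; move: Hs Ha => /=.
set a := yk Y (lift ord0 l) 0 (ci l); set b := yk Y (lift ord0 l) 0 (cj l).
set x := yk Y (widen_ord (leqnSn q) l) 0 (ci l); set y := yk Y (widen_ord (leqnSn q) l) 0 (cj l).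
rewrite ler_norml ge_max => Hs /andP[H1 H2].
split => //; apply/andP; split; lra.
Qed.

Lemma pb_pt Y : Qn ci cj Y -> pb (pt Y) = Y.
Proof.
move=> HY; rewrite /pb -[RHS]vec_mxK; congr mxvec; apply/matrixP=> k t.
by rewrite mxE (zm_pt' k HY) /yk mxE.
Qed.

Lemma pt_pb w : pt (pb w) = w.
Proof.
rewrite /pt -[RHS]hsubmxK; congr row_mx.
  by apply/rowP => t; rewrite ykpb.
rewrite -[RHS]vec_mxK; congr mxvec; apply/matrixP => l e.
rewrite mxE; case: e => [[|[|e]] He] //=; rewrite ykpb (_ : nat_of_ord (lift ord0 l) = l.+1) // zmS' mxE.
  by rewrite eqxx /wa; congr (vec_mx _ _ _); apply: val_inj.
by rewrite cjci eqxx /wb; congr (vec_mx _ _ _); apply: val_inj.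
Qed.

End S.

Theorem claim3 (R : realFieldType) (n q : nat) (ci cj : 'I_q -> 'I_n) :
  (forall l : 'I_q, (ci l < cj l)%N) ->
  is_sorting_network R ci cj ->
  exists (pt : 'rV[R]_(q.+1 * n) -> 'rV[R]_(n + q * 2))
         (pb : 'rV[R]_(n + q * 2) -> 'rV[R]_(q.+1 * n)),
    [/\ affine_map pt, affine_map pb,
        pb @` tQn ci cj = Qn ci cj & pt @` Qn ci cj = tQn ci cj].
Proof.
move=> Hlt _.
exists (pt ci cj), (pb ci cj); split; [exact: pt_aff | exact: pb_aff | |].
- apply/seteqP; split.
  + by move=> _ [w Hw <-]; exact: pb_Q.
  + by move=> Y HY; exists (pt ci cj Y); [exact: pt_tQ | exact: pb_pt].
- apply/seteqP; split.
  + by move=> _ [Y HY <-]; exact: pt_tQ.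
  + by move=> w Hw; exists (pb ci cj w); [exact: pb_Q | exact: pt_pb].
Qed.
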